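(* Let $\Gamma\in\mathbb{R}^{n\times m}$ and let $R:\mathbb{R}^n_{\ge0}\to\mathbb{R}^m$ be locally Lipschitz such that $\dot S=\Gamma R(S)$ leaves $\mathbb{R}^n_{\ge0}$ invariant and is forward complete; fix $\sigma\in\mathbb{R}^n_{\ge0}$ and consider $\dot x=R(\sigma+\Gamma x)$ on $X_\sigma=\{x\in\mathbb{R}^m:\sigma+\Gamma x\ge0\}$. Suppose $\Gamma$ has rank exactly $m-1$, with kernel spanned by a unit vector $v$ all of whose entries are positive. Let $x(t)$, $t\ge0$, be a solution of $\dot x=R(\sigma+\Gamma x)$ and $\pi_v(x)=x-(v'x)v$. Then $\Gamma x(t)$ is bounded if and only if $\pi_v x(t)$ is bounded.
   Context: Inequalities between vectors are componentwise; prime denotes transpose. *)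

(* Defs.v *)
From HB Require Import structures.
From mathcomp Require Import all_boot all_order all_algebra.
From mathcomp Require Import all_classical all_reals all_analysis.
Set Implicit Arguments. Unset Strict Implicit. Unset Printing Implicit Defensive.
Import Order.TTheory GRing.Theory Num.Theory.
Import numFieldNormedType.Exports.
Local Open Scope classical_set_scope.
Local Open Scope ring_scope.

Definition nonneg_vec (R : realType) (n : nat) (S : 'cV[R]_n) : Prop :=
  forall i, 0 <= S i 0.

(* local Lipschitz continuity of f on the set D (norms = max norms of matrices) *)
Definition locally_lipschitz_on (R : realType) (n m : nat)
  (D : set 'cV[R]_n) (f : 'cV[R]_n -> 'cV[R]_m) : Prop :=
  forall x0, D x0 -> exists2 e : R, 0 < e & exists L : R,
    forall y z, D y -> D z -> `|y - x0| < e -> `|z - x0| < e ->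
      `|f y - f z| <= L * `|y - z|.

Definition forward_solution (R : realType) (k : nat)
  (F : 'cV[R]_k -> 'cV[R]_k) (x : R -> 'cV[R]_k) : Prop :=
  {within [set t : R | 0 <= t], continuous x} /\
  forall t : R, 0 < t -> is_derive t 1 x (F (x t)).

(* orthogonal projection onto v^perp (for unit v): pi_v(x) = x - (v'x) v *)
Definition proj_perp (R : realType) (m : nat) (v x : 'cV[R]_m) : 'cV[R]_m :=
  x - ((v^T *m x) 0 0) *: v.

Definition bounded_traj (R : realType) (k : nat) (y : R -> 'cV[R]_k) : Prop :=
  exists M : R, forall t : R, 0 <= t -> `|y t| <= M.

(* Main.v *)
Require Import Defs.
From HB Require Import structures.
From mathcomp Require Import all_boot all_order all_algebra.
From mathcomp Require Import all_classical all_reals all_analysis.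
Import Order.TTheory GRing.Theory Num.Theory.
Import numFieldNormedType.Exports.
Local Open Scope classical_set_scope.
Local Open Scope ring_scope.

Lemma entry_le (R : realType) p q (A : 'M[R]_(p, q)) i j : `|A i j| <= `|A|.
Proof.
rewrite [leRHS]/Num.norm /= mx_normrE.
by apply/bigmax_geP; right; exists (i, j).
Qed.

Lemma mul_norm_le (R : realType) p q (L : 'M[R]_(p, q)) (z : 'cV[R]_q) :
  `|L *m z| <= (\sum_j `|col j L|) * `|z|.
Proof.
have -> : L *m z = \sum_j z j 0 *: col j L.
  apply/matrixP => i k; rewrite !mxE summxE; apply: eq_bigr => j _.
  by rewrite !mxE ord1 mulrC.
rewrite mulr_suml; apply: le_trans (ler_norm_sum _ _ _) _.
apply: ler_sum => j _; rewrite normrZ mulrC; apply: ler_wpM2l => //.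
exact: entry_le.
Qed.

Theorem lemma5 (R : realType) (n m : nat) (Gamma : 'M[R]_(n, m))
  (Rf : 'cV[R]_n -> 'cV[R]_m) (sigma : 'cV[R]_n) (v : 'cV[R]_m)
  (x : R -> 'cV[R]_m) :
  locally_lipschitz_on (@nonneg_vec R n) Rf ->
  (forall S0 : 'cV[R]_n, nonneg_vec S0 ->
     exists S : R -> 'cV[R]_n,
       [/\ S 0 = S0, forward_solution (fun s => Gamma *m Rf s) S
         & forall t : R, 0 <= t -> nonneg_vec (S t)]) ->
  nonneg_vec sigma ->
  \rank Gamma = (m - 1)%N ->
  (forall y : 'cV[R]_m, Gamma *m y = 0 <-> exists c : R, y = c *: v) ->
  (v^T *m v) 0 0 = 1 ->
  (forall i, 0 < v i 0) ->
  forward_solution (fun y => Rf (sigma + Gamma *m y)) x ->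
  (forall t : R, 0 <= t -> nonneg_vec (sigma + Gamma *m x t)) ->
  (bounded_traj (fun t => Gamma *m x t) <-> bounded_traj (fun t => proj_perp v (x t))).
Proof.
move=> _ _ _ _ hker hvv _ _ _.
have Gv : Gamma *m v = 0 by apply/hker; exists 1; rewrite scale1r.
have GP : forall y, Gamma *m proj_perp v y = Gamma *m y.
  by move=> y; rewrite /proj_perp mulmxBr -scalemxAr Gv scaler0 subr0.
have vP : forall y, v^T *m proj_perp v y = 0.
  move=> y; apply/matrixP => i j; rewrite !ord1 /proj_perp mulmxBr -scalemxAr.
  rewrite mxE [X in _ + X]mxE [X in _ - X]mxE hvv mulr1 [RHS]mxE; exact: subrr.
pose A := col_mx Gamma v^T.
have Ay : forall y, A *m y = col_mx (Gamma *m y) (v^T *m y) by move=> y; exact: mul_col_mx.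
have frA : row_free A^T.
  apply: inj_row_free => w hw.
  have : A *m w^T = 0 by rewrite -[A *m _]trmxK trmx_mul trmxK hw trmx0.
  rewrite Ay => /eqP; rewrite col_mx_eq0 => /andP[/eqP h1 /eqP h2].
  have [c hc] := (hker _).1 h1.
  have c0 : c = 0.
    by move/matrixP: h2 => /(_ 0 0); rewrite hc -scalemxAr mxE hvv mulr1 mxE.
  by rewrite -[w]trmxK hc c0 scale0r trmx0.
have : row_full A by rewrite /row_full -mxrank_tr.
move=> /row_fullP[B hB].
pose L := lsubmx B.
have LP : forall y, proj_perp v y = L *m (Gamma *m y).
  move=> y; rewrite -[proj_perp v y]mul1mx -hB -mulmxA Ay vP GP.
  by rewrite -[B]hsubmxK mul_row_col mulmx0 addr0.
split=> [[M hM]|[M hM]].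
- exists ((\sum_j `|col j L|) * M) => t t0; rewrite LP.
  apply: le_trans (@mul_norm_le _ _ _ L _) _; apply: ler_wpM2l; last exact: hM.
  by apply: sumr_ge0 => j _.
- exists ((\sum_j `|col j Gamma|) * M) => t t0; rewrite -GP.
  apply: le_trans (@mul_norm_le _ _ _ Gamma _) _; apply: ler_wpM2l; last exact: hM.
  by apply: sumr_ge0 => j _.
Qed.
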